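(* Let $q$ be a prime power and $n\ge0$. Let $s_A(n,q)$, $c_A(n,q)$, $ss_A(n,q)$ be the proportions of separable, cyclic, and semisimple elements of $A(n,q)$, respectively. Then \[ s_A(n,q)\le ss_A(n,q)\le s_A(n,q)+(1-c_A(n,q)). \]
   Context: $A(n,q)$ is the group of matrices $x\in GL(n+1,q)$ with $x_{11}=1$ and $x_{j1}=0$ for $j\ge2$, viewed in $GL(n+1,q)$. A matrix is separable if its characteristic polynomial is square-free, cyclic if its minimal polynomial equals its characteristic polynomial, and semisimple if it is diagonalizable over the algebraic closure of $\mathbb{F}_q$. *)

(* Defs.v *)
From HB Require Import structures.
From mathcomp Require Import all_boot all_order all_algebra all_field.
From mathcomp Require Import boolp.
Set Implicit Arguments. Unset Strict Implicit. Unset Printing Implicit Defensive.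
Import GRing.Theory.
Local Open Scope ring_scope.

Definition alg_closure (F : finFieldType) : closedFieldType :=
  projT1 (countable_algebraic_closure F).
Definition to_closure (F : finFieldType) : {rmorphism F -> alg_closure F} :=
  proj1_sig (projT2 (countable_algebraic_closure F)).

(* A(n,q): matrices x in GL(n+1,q) with first column (1,0,...,0)^T. *)
Definition Aset (F : finFieldType) (n : nat) : {set 'M[F]_n.+1} :=
  [set x : 'M[F]_n.+1 | (x \in unitmx) &&
     [forall i : 'I_n.+1, x i ord0 == (i == ord0)%:R]].

Definition squarefree_poly (F : fieldType) (p : {poly F}) : Prop :=
  forall d : {poly F}, d * d %| p -> (size d <= 1)%N.

Definition separable_mx (F : fieldType) (m : nat) (x : 'M[F]_m.+1) : Prop :=
  squarefree_poly (char_poly x).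

Definition cyclic_mx (F : fieldType) (m : nat) (x : 'M[F]_m.+1) : Prop :=
  mxminpoly x = char_poly x.

Definition semisimple_mx (F : finFieldType) (m : nat) (x : 'M[F]_m.+1) : Prop :=
  diagonalizable (map_mx (to_closure F) x).

Definition propA (F : finFieldType) (n : nat) (P : 'M[F]_n.+1 -> Prop) : rat :=
  (#|[set x in Aset F n | `[< P x >]]|%:R / #|Aset F n|%:R)%R.

Definition sA (F : finFieldType) (n : nat) : rat := propA (@separable_mx F n).
Definition cA (F : finFieldType) (n : nat) : rat := propA (@cyclic_mx F n).
Definition ssA (F : finFieldType) (n : nat) : rat := propA (@semisimple_mx F n).

(* Main.v *)
Require Import Defs.
From HB Require Import structures.
From mathcomp Require Import all_boot all_order all_algebra all_field.
From mathcomp Require Import boolp.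
Import GRing.Theory Num.Theory.
Local Open Scope ring_scope.

Lemma deriv0_square {F : finFieldType} (u : {poly F}) :
  u^`() = 0 -> (1 < size u)%N -> exists2 h : {poly F}, (1 < size h)%N & h * h %| u.
Proof.
move=> u'0 su.
have [p pr_p pcharp] := finPcharP F.
have p_gt0 := prime_gt0 pr_p.
have inj : injective (fun x : F => x ^+ p).
  by move=> x y /=; rewrite -!(pFrobenius_autE pcharp); apply: fmorph_inj.
pose r := invF inj.
have rK a : r a ^+ p = a := f_invF inj a.
pose h := \poly_(j < size u) r u`_(j * p).
have hu : h ^+ p = u.
  have pcharP : p \in [pchar {poly F}] by rewrite pchar_poly.
  rewrite -(pFrobenius_autE pcharP) /h poly_def rmorph_sum /=.
  under eq_bigr do rewrite pFrobenius_autE -mul_polyC exprMn -rmorphXn rK -exprM mul_polyC.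
  apply/polyP => i; rewrite coef_sum.
  have [[{}i ->] | p'i] := altP (@dvdnP p i); last first.
    rewrite big1 => [|j _]; last first.
      rewrite coefZ coefXn [_ == _](contraNF _ p'i) ?mulr0 // => /eqP->.
      by rewrite dvdn_mull.
    rewrite (dvdn_pcharf pcharp) in p'i.
    case: i p'i => [|i] p'i; first by rewrite eqxx in p'i.
    apply/esym/eqP; move: (congr1 (fun q : {poly F} => q`_i) u'0).
    rewrite coef_deriv coef0 => /eqP; rewrite -mulr_natr mulf_eq0.
    by rewrite (negPf p'i) orbF.
  have [lti | lei] := ltnP i (size u).
    rewrite (bigD1 (Ordinal lti)) //= big1 ?addr0 => [|j ij].
      by rewrite coefZ coefXn eqxx mulr1.
    rewrite coefZ coefXn eqn_pmul2r //.
    have /negPf-> : i != j :> nat.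
      by rewrite eq_sym; apply: contra ij => /eqP ji; apply/eqP/val_inj.
    by rewrite mulr0.
  rewrite nth_default; last by apply: leq_trans lei _; rewrite leq_pmulr.
  rewrite big1 // => j _; rewrite coefZ coefXn eqn_pmul2r //.
  have /negPf-> : i != j :> nat by rewrite neq_ltn (leq_trans (ltn_ord j) lei) orbT.
  by rewrite mulr0.
exists h.
  rewrite ltnNge; apply/negP => /size1_polyC hC.
  move: su; rewrite -hu hC -rmorphXn size_polyC.
  by case: (_ != 0).
have p2 := prime_gt1 pr_p.
rewrite -hu -(subnKC p2) !exprS mulrA.
exact: dvdp_mulr.
Qed.

Lemma sqf_sep (F : finFieldType) (P : {poly F}) :
  P != 0 -> squarefree_poly P -> separable_poly P.
Proof.
move=> P0 sq; apply/separable_polyP; split.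
  apply/poly_square_freeP => u su; apply/negP; rewrite expr2 => /[dup] uu /sq.
  rewrite leq_eqVlt (negPf su) /= ltnS leqn0 size_poly_eq0 => /eqP u0.
  by move: uu; rewrite u0 mulr0 dvd0p (negPf P0).
move=> u uP su; apply/eqP => u'0.
have [h sh hu] := deriv0_square u u'0 su.
by have := sq h (dvdp_trans hu uP); rewrite leqNgt sh.
Qed.

Lemma sep_ss (F : finFieldType) (n : nat) (x : 'M[F]_n.+1) :
  separable_mx x -> semisimple_mx x.
Proof.
rewrite /separable_mx /semisimple_mx => sq.
have sepP : separable_poly (char_poly x).
  by apply: sqf_sep => //; apply: monic_neq0; apply: char_poly_monic.
set y := map_mx (to_closure F) x.
have : separable_poly (char_poly y) by rewrite -map_char_poly separable_map.
have [rs Hrs] := closed_field_poly_normal (char_poly y).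
have Hc : char_poly y = \prod_(z <- rs) ('X - z%:P).
  by rewrite {1}Hrs (monicP (char_poly_monic y)) scale1r.
rewrite Hc separable_prod_XsubC => urs.
apply/diagonalizableP; exists rs => //.
by rewrite -Hc mxminpoly_dvd_char.
Qed.

Lemma ss_cyc_sep (F : finFieldType) (n : nat) (x : 'M[F]_n.+1) :
  semisimple_mx x -> cyclic_mx x -> separable_mx x.
Proof.
rewrite /separable_mx /semisimple_mx /cyclic_mx => /diagonalizableP [rs urs Hd] cyc.
have : separable_poly (map_poly (to_closure F) (char_poly x)).
  apply: (dvdp_separable _ (_ : separable_poly (\prod_(z <- rs) ('X - z%:P)))).
    by rewrite -cyc -mxminpoly_map.
  by rewrite separable_prod_XsubC.
rewrite separable_map => sepP d dd.
by have := separable_coprime sepP dd; rewrite coprimepp => /eqP ->.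
Qed.

Theorem theorem5p11 (F : finFieldType) (n : nat) :
  sA F n <= ssA F n /\ ssA F n <= sA F n + (1 - cA F n).
Proof.
rewrite /sA /ssA /cA /propA.
set A := Aset F n.
set S := [set x in A | `[< separable_mx x >]].
set SS := [set x in A | `[< semisimple_mx x >]].
set C := [set x in A | `[< cyclic_mx x >]].
have A0 : (0 < #|A|)%N.
  apply/card_gt0P; exists 1%:M; rewrite /A /Aset inE unitmx1 /=.
  by apply/forallP => i; rewrite mxE.
have N0 : (#|A|%:R : rat) != 0 by rewrite pnatr_eq0 -lt0n.
have Ninv : (0 : rat) <= #|A|%:R^-1 by rewrite invr_ge0 ler0n.
have SSS : S \subset SS.
  apply/subsetP => x; rewrite !inE => /andP[-> /asboolP h]; apply/asboolP.
  exact: sep_ss.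
have SSsub : SS \subset S :|: (A :\: C).
  apply/subsetP => x; rewrite !inE => /andP[-> /asboolP h] /=; rewrite andbT.
  case: (boolP `[< cyclic_mx x >]) => [/asboolP c|]; rewrite ?orbT //.
  by rewrite orbF; apply/asboolP; apply: ss_cyc_sep.
have CA : C \subset A by apply/subsetP => x; rewrite inE => /andP[].
have cardD : #|A :\: C| = (#|A| - #|C|)%N by rewrite cardsD (setIidPr CA).
have CleA : (#|C| <= #|A|)%N by apply: subset_leq_card.
split.
  by apply: ler_wpM2r => //; rewrite ler_nat; apply: subset_leq_card.
have -> : (#|S|%:R / #|A|%:R + (1 - #|C|%:R / #|A|%:R) : rat)
          = (#|S| + (#|A| - #|C|))%:R / #|A|%:R.
  by rewrite natrD natrB // mulrDl mulrBl divff.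
apply: ler_wpM2r => //; rewrite ler_nat -cardD.
apply: leq_trans (subset_leq_card SSsub) _.
by rewrite cardsU leq_subr.
Qed.
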